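(* Let $A\in\mathbb{R}^{m\times n}$, and let $p:[0,\infty)\to\mathbb{R}$ be concave, increasing and continuous with right derivative $p'(0+)>0$. For $x\in\mathbb{R}^n$ define $R(x)\in\mathbb{R}^n$ by $$R(x)_i=\mathrm{sgn}(x_i)\Big(1-\frac{d_i(x)}{p'(0+)}\Big),$$ where $d_i(x)=p'(0+)$ if $x_i=0$, and, if $x_i\neq0$, $d_i(x)$ is any element of the superdifferential $[p'_+(|x_i|),p'_-(|x_i|)]$ of the concave function $p$ at $|x_i|$, chosen depending only on $|x_i|$. Let $\bar x\in\mathbb{R}^n$ have support $T$ and equal-height peaks, i.e. $|\bar x_i|=|\bar x_j|$ for all $i,j\in T$. Consider the iteration $x^{(0)}=\mathbf{0}$ and $$x^{(k+1)}\in\arg\min_{x\in\mathbb{R}^n}\ \|x\|_1-\langle R(x^{(k)}),x\rangle\quad\text{s.t.}\quad Ax=A\bar x,\qquad k=0,1,2,\dots$$ If basis pursuit uniquely recovers $\bar x$, i.e. $\bar x$ is the unique solution of $\min_x\|x\|_1$ s.t. $Ax=A\bar x$, then so does the iteration: for every $k\ge0$ the minimization problem defining $x^{(k+1)}$ has $\bar x$ as its unique solution, so $x^{(k)}=\bar x$ for all $k\ge1$.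
   Context: $\mathrm{sgn}(t)=t/|t|$ for $t\neq0$ and $\mathrm{sgn}(0)=0$. The support of $\bar x$ is $\{i:\bar x_i\neq0\}$. *)

(* Defs.v *)
From HB Require Import structures.
From mathcomp Require Import all_boot all_order all_algebra.
From mathcomp Require Import all_classical all_reals all_analysis.
Set Implicit Arguments. Unset Strict Implicit. Unset Printing Implicit Defensive.
Import Order.TTheory GRing.Theory Num.Theory.
Import numFieldNormedType.Exports.
Local Open Scope classical_set_scope.
Local Open Scope ring_scope.

Section Defs.
Variable R : realType.

Definition concave_on_nonneg (p : R -> R) : Prop :=
  forall x y t : R, 0 <= x -> 0 <= y -> 0 <= t -> t <= 1 ->
    t * p x + (1 - t) * p y <= p (t * x + (1 - t) * y).

(* p is increasing on [0, +oo) (read as nondecreasing) *)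
Definition increasing_on_nonneg (p : R -> R) : Prop :=
  forall x y : R, 0 <= x -> x <= y -> p x <= p y.

Definition is_right_deriv (p : R -> R) (t l : R) : Prop :=
  (fun h : R => (p (t + h) - p t) / h) @ at_right (0 : R) --> l.

Definition is_left_deriv (p : R -> R) (t l : R) : Prop :=
  (fun h : R => (p (t + h) - p t) / h) @ at_left (0 : R) --> l.

Definition superdiff_selection (p g : R -> R) : Prop :=
  forall t : R, 0 < t -> forall l r : R,
    is_right_deriv p t r -> is_left_deriv p t l -> r <= g t <= l.

(* d_i(x) and R(x) of the paper; dp0 = p'(0+), g = selection of superdifferential *)
Definition dweight (dp0 : R) (g : R -> R) (s : R) : R :=
  if s == 0 then dp0 else g `|s|.

Definition Rmap n (dp0 : R) (g : R -> R) (x : 'cV[R]_n) : 'cV[R]_n :=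
  \col_i (Num.sg (x i 0) * (1 - dweight dp0 g (x i 0) / dp0)).

Definition l1norm n (x : 'cV[R]_n) : R := \sum_i `|x i 0|.

Definition inner n (u x : 'cV[R]_n) : R := \sum_i u i 0 * x i 0.

Definition obj n (r x : 'cV[R]_n) : R := l1norm x - inner r x.

Definition is_argmin m n (A : 'M[R]_(m, n)) (b : 'cV[R]_m) (r x : 'cV[R]_n) : Prop :=
  A *m x = b /\ forall y : 'cV[R]_n, A *m y = b -> obj r x <= obj r y.

Definition unique_argmin m n (A : 'M[R]_(m, n)) (b : 'cV[R]_m) (r x : 'cV[R]_n) : Prop :=
  is_argmin A b r x /\ forall y : 'cV[R]_n, is_argmin A b r y -> y = x.

Definition bp_unique m n (A : 'M[R]_(m, n)) (xbar : 'cV[R]_n) : Prop :=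
  forall y : 'cV[R]_n, A *m y = A *m xbar -> y != xbar -> l1norm xbar < l1norm y.

Definition equal_height n (x : 'cV[R]_n) : Prop :=
  forall i j : 'I_n, x i 0 != 0 -> x j 0 != 0 -> `|x i 0| = `|x j 0|.

End Defs.

(* Main.v *)
Require Import Defs.
From HB Require Import structures.
From mathcomp Require Import all_boot all_order all_algebra.
From mathcomp Require Import all_classical all_reals all_analysis.
From mathcomp Require Import ring lra.
Import Order.TTheory GRing.Theory Num.Theory.
Import numFieldNormedType.Exports.
Local Open Scope classical_set_scope.
Local Open Scope ring_scope.
Lemma sg_mul (R : realType) (x : R) : Num.sg x * x = `|x|.
Proof. by have [->|xp|xn] := sgrP x; rewrite ?mul1r ?mulN1r ?normr0 ?mulr0. Qed.
Lemma sg_le (R : realType) (s y : R) : Num.sg s * y <= `|y|.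
Proof. case: (sgrP s) => _; rewrite ?mul0r ?mul1r ?mulN1r ?normr_ge0 ?ler_norm //.
by rewrite -normrN ler_norm. Qed.

Lemma key (R : realType) m n (A : 'M[R]_(m,n)) (xb r : 'cV[R]_n) (c : R) :
  0 <= c -> c <= 1 -> (forall i, r i 0 = c * Num.sg (xb i 0)) ->
  equal_height xb -> bp_unique A xb ->
  unique_argmin A (A *m xb) r xb.
Proof.
move=> c0 c1 rE eqh bp.
pose S (y : 'cV[R]_n) := \sum_i Num.sg (xb i 0) * y i 0.
have objE y : obj r y = l1norm y - c * S y.
  rewrite /obj /inner /S mulr_sumr; congr (_ - _); apply: eq_bigr => i _.
  by rewrite rE mulrA.
have SL y : S y <= l1norm y by apply: ler_sum => i _; exact: sg_le.
have Sx : S xb = l1norm xb by apply: eq_bigr => i _; exact: sg_mul.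
have L0 (y : 'cV[R]_n) : 0 <= l1norm y by apply: sumr_ge0 => i _.
have argx : is_argmin A (A *m xb) r xb.
  split=> // y Ay; have [->//|yx] := eqVneq y xb.
  have lt := bp y Ay yx.
  rewrite !objE Sx.
  have := SL y => Sy.
  have H1 : c * S y <= c * l1norm y by rewrite ler_wpM2l.
  have H2 : (1 - c) * l1norm xb <= (1 - c) * l1norm y.
    by rewrite ler_wpM2l ?subr_ge0 // ltW.
  lra.
split=> // y [Ay /(_ xb erefl)]; rewrite !objE Sx => oy.
have [//|yx] := eqVneq y xb; exfalso.
have lt := bp y Ay yx.
have Sy := SL y.
have [c1'|c1'] := ltrP c 1.
  have H1 : c * S y <= c * l1norm y by rewrite ler_wpM2l.
  have H2 : (1 - c) * l1norm xb < (1 - c) * l1norm y.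
    by rewrite ltr_pM2l ?subr_gt0.
  lra.
have ce : c = 1 by apply/eqP; rewrite eq_le c1.
subst c.
have SyE : S y = l1norm y by lra.
have yi : forall i, Num.sg (xb i 0) * y i 0 = `|y i 0|.
  move=> i; apply/eqP; rewrite eq_sym -subr_eq0; apply/eqP.
  move: i (erefl true); apply: psumr_eq0P.
    by move=> i _; rewrite subr_ge0 sg_le.
  by rewrite sumrB; move: SyE; rewrite /S /l1norm => ->; rewrite subrr.
have [[i0 xi0]|noz] := pselect (exists i, xb i 0 != 0); last first.
  have xz i : xb i 0 = 0 by apply/eqP; apply: contra_notT noz => H; exists i.
  move/eqP: yx; apply; apply/matrixP => i j; rewrite (ord1 j).
  by have := yi i; rewrite xz sgr0 mul0r => /esym/normr0_eq0 ->.
pose h := `|xb i0 0|.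
have hp : 0 < h by rewrite normr_gt0.
pose M := l1norm y.
have M0 : 0 <= M := L0 y.
pose t := h / (M + 1).
have tp : 0 < t by rewrite divr_gt0 // ltr_wpDl.
have tM : t * M < h.
  by rewrite /t mulrAC ltr_pdivrMr ?ltr_wpDl //; nra.
have yiM i : `|y i 0| <= M.
  rewrite /M /l1norm (bigD1 i) //= lerDl; exact: sumr_ge0.
pose z := (1 + t) *: xb - t *: y.
have Az : A *m z = A *m xb.
  by rewrite /z mulmxBr -!scalemxAr Ay scalerDl scale1r addrK.
have zE i : z i 0 = (1 + t) * xb i 0 - t * y i 0 by rewrite !mxE.
have zi i : `|z i 0| = (1 + t) * `|xb i 0| - t * `|y i 0|.
  have [xi|xi] := eqVneq (xb i 0) 0.
    have := yi i; rewrite xi sgr0 mul0r => /esym/normr0_eq0 yi0.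
    by rewrite zE xi yi0 !(mulr0, subrr, normr0, normr0).
  have hi : `|xb i 0| = h by apply: eqh.
  have s1 : `|Num.sg (xb i 0)| = 1 by rewrite normr_sg xi.
  have e : Num.sg (xb i 0) * z i 0 = (1 + t) * (Num.sg (xb i 0) * xb i 0) - t * (Num.sg (xb i 0) * y i 0).
    by rewrite zE; ring.
  rewrite sg_mul yi hi in e.
  rewrite -[LHS]mul1r -s1 -normrM e hi ger0_norm //; have := yiM i; nra.
have zx : z != xb.
  apply: contra_neq yx => zx; apply/matrixP => k j; rewrite (ord1 j).
  have := f_equal (fun w : 'cV[R]_n => w k 0) zx; rewrite /= zE.
  move=> H; have : t * (y k 0 - xb k 0) = 0 by lra.
  by move/eqP; rewrite mulf_eq0 (gt_eqF tp) /= subr_eq0 => /eqP.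
have := bp z Az zx.
have -> : l1norm z = (1 + t) * l1norm xb - t * l1norm y.
  by rewrite /l1norm (eq_bigr _ (fun i _ => zi i)) sumrB -!mulr_sumr.
nra.
Qed.
Set Implicit Arguments. Unset Strict Implicit.
Section An.
Variable R : realType.
Variable p : R -> R.
Hypothesis conc : concave_on_nonneg p.
Hypothesis incr : increasing_on_nonneg p.

Definition sl (a b : R) := (p b - p a) / (b - a).

Lemma divle (X Y d1 d2 : R) : 0 < d1 -> 0 < d2 -> X * d2 <= Y * d1 -> X / d1 <= Y / d2.
Proof.
move=> d1p d2p H; rewrite ler_pdivlMr // mulrAC ler_pdivrMr //.
Qed.

Lemma chord a b c : 0 <= a -> a < b -> b < c -> sl a c <= sl a b /\ sl b c <= sl a c.
Proof.
move=> a0 ab bc.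
have ca : 0 < c - a by lra.
pose t := (c - b) / (c - a).
have t0 : 0 <= t by rewrite divr_ge0 //; lra.
have t1 : t <= 1 by rewrite ler_pdivrMr //; lra.
have H := conc a0 (ltW (le_lt_trans a0 (lt_trans ab bc))) t0 t1.
have tb : t * a + (1 - t) * c = b by rewrite /t; field; lra.
rewrite tb in H.
have K : (c - b) * p a + (b - a) * p c <= p b * (c - a).
  have -> : (c - b) * p a + (b - a) * p c = (t * p a + (1 - t) * p c) * (c - a).
    by rewrite /t; field; lra.
  by rewrite ler_pM2r.
split; apply: divle; lra.
Qed.

Lemma chord4 a b c d : 0 <= a -> a < b -> b <= c -> c < d -> sl c d <= sl a b.
Proof.
move=> a0 ab bc cd.
have [H1 H2] := chord a0 ab (le_lt_trans bc cd).
have [ebc|bc'] := eqVneq b c; first by rewrite -ebc; apply: le_trans H2 H1.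
have bc2 : b < c by rewrite lt_neqAle bc' bc.
have [H3 H4] := chord (ltW (le_lt_trans a0 ab)) bc2 cd.
exact: le_trans H4 (le_trans H2 H1).
Qed.

Lemma sl_ge0 a b : 0 <= a -> a < b -> 0 <= sl a b.
Proof. move=> a0 ab; rewrite /sl divr_ge0 ?subr_ge0 ?incr //; exact: ltW. Qed.


Lemma gbound dp0 g : is_right_deriv p 0 dp0 -> superdiff_selection p g ->
  forall h, 0 < h -> 0 <= g h <= dp0.
Proof.
move=> d0 sd h hp.
pose fR := fun u : R => (p (h + u) - p h) / u.
have eR u : fR u = sl h (h + u).
  by rewrite /fR /sl; congr (_ / _); ring.
pose F := fR \o -%R.
have eL u : F u = sl (h - u) h.
  rewrite /F /fR /sl /=; have -> : h - (h - u) = u by ring.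
  by rewrite invrN mulrN -mulNr opprB.
have cR : fR x @[x --> 0^'+] --> sup (fR @` [set` Interval (BRight 0) (BLeft 1)]).
  apply: nonincreasing_at_right_cvgr.
  - by rewrite bnd_simp.
  - move=> u v; rewrite !in_itv /= => /andP[u0 _] /andP[v0 _] uv.
    rewrite !eR.
    have [->//|uv'] := eqVneq u v.
    have uv2 : u < v by rewrite lt_neqAle uv' uv.
    by case: (@chord h (h + u) (h + v)) => //; try lra.
  - exists (sl 0 h) => _ [u /= uin <-].
    move: uin; rewrite in_itv /= => /andP[u0 _].
    by rewrite eR; case: (@chord 0 h (h + u)) => //; lra.
have cLr : F x @[x --> 0^'+] --> inf (F @` [set` Interval (BRight 0) (BLeft h)]).
  apply: nondecreasing_at_right_cvgr.
  - by rewrite bnd_simp.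
  - move=> u v; rewrite !in_itv /= => /andP[u0 uh] /andP[v0 vh] uv.
    rewrite !eL.
    have [->//|uv'] := eqVneq u v.
    have uv2 : u < v by rewrite lt_neqAle uv' uv.
    by case: (@chord (h - v) (h - u) h) => //; try lra.
  - exists 0 => _ [u /= uin <-].
    move: uin; rewrite in_itv /= => /andP[u0 uh].
    by rewrite eL sl_ge0 //; lra.
set r := sup _ in cR.
set l := inf _ in cLr.
have cL : fR x @[x --> 0^'-] --> l.
  by apply/cvg_at_leftNP; rewrite oppr0.
have /andP[rg gl] := sd h hp l r cR cL.
apply/andP; split.
  apply: le_trans rg.
  apply: (cvgr_to_ge cR); near=> u.
  have u0 : 0 < u by near: u; exact: nbhs_right_gt.
  by rewrite eR sl_ge0 //; lra.
apply: le_trans gl _.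
have h2 : 0 < h / 2 by rewrite divr_gt0.
apply: (@le_trans _ _ (sl (h / 2) h)).
  apply: (cvgr_to_le cLr); near=> u.
  have u0 : 0 < u by near: u; exact: nbhs_right_gt.
  have uh : u < h / 2 by near: u; exact: nbhs_right_lt.
  by rewrite eL; case: (@chord (h / 2) (h - u) h) => //; lra.
apply: (cvgr_to_ge d0); near=> u.
have u0 : 0 < u by near: u; exact: nbhs_right_gt.
have uh : u < h / 2 by near: u; exact: nbhs_right_lt.
have -> : (p (0 + u) - p 0) / u = sl 0 u by rewrite /sl add0r subr0.
apply: chord4 => //; lra.
Unshelve. all: by end_near.
Qed.
End An.
Unset Implicit Arguments.

Theorem theorem4p2 (R : realType) (m n : nat) (A : 'M[R]_(m, n))
    (p : R -> R) (dp0 : R) (g : R -> R) (xbar : 'cV[R]_n)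
    (x : nat -> 'cV[R]_n) :
  concave_on_nonneg p ->
  increasing_on_nonneg p ->
  {within `[0, +oo[, continuous p} ->
  is_right_deriv p 0 dp0 -> 0 < dp0 ->
  superdiff_selection p g ->
  equal_height xbar ->
  bp_unique A xbar ->
  x 0%N = 0 ->
  (forall k : nat, is_argmin A (A *m xbar) (Rmap dp0 g (x k)) (x k.+1)) ->
  forall k : nat,
    unique_argmin A (A *m xbar) (Rmap dp0 g (x k)) xbar /\ x k.+1 = xbar.
Proof.
move=> conc incr _ d0 dp0p sd eqh bp x0 xs.
have gb := gbound conc incr d0 sd.
have Rm : forall v, (v = 0 \/ v = xbar) -> exists c, (0 <= c <= 1) /\
    forall i, Rmap dp0 g v i 0 = c * Num.sg (xbar i 0).
  move=> v [->|->].
    by exists 0; split; [rewrite lexx ler01 | move=> i; rewrite !mxE sgr0 !mul0r].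
  have [[i0 xi0]|noz] := pselect (exists i, xbar i 0 != 0).
    exists (1 - g `|xbar i0 0| / dp0).
    have /andP[g0 g1] := gb `|xbar i0 0| (ltac:(by rewrite normr_gt0)).
    split.
      apply/andP; split.
        by rewrite subr_ge0 ler_pdivrMr // mul1r.
      have : 0 <= g `|xbar i0 0| / dp0 by rewrite divr_ge0 // ltW.
      lra.
    move=> i; rewrite !mxE /dweight.
    have [xi|xi] := eqVneq (xbar i 0) 0; first by rewrite xi sgr0 !mul0r mulr0.
    by rewrite (eqh i i0 xi xi0) mulrC.
  exists 0; split; first by rewrite lexx ler01.
  move=> i; have xi : xbar i 0 = 0 by apply/eqP; apply: contra_notT noz => H; exists i.
  by rewrite !mxE xi sgr0 !mul0r.
have P : forall k, x k = 0 \/ x k = xbar.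
  elim => [|k IH]; first by left.
  right; have [c [/andP[c0 c1] rc]] := Rm _ IH.
  have [_ U] := @key _ _ _ A _ _ _ c0 c1 rc eqh bp.
  exact: U _ (xs k).
move=> k; have [c [/andP[c0 c1] rc]] := Rm _ (P k).
have [H U] := @key _ _ _ A _ _ _ c0 c1 rc eqh bp.
by split => //; apply: U; apply: xs.
Qed.
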